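(* Let $V:\mathbb{Z}^d\to\mathbb{R}^+\cup\{+\infty\}$ be a strictly convex potential with $V(\vec0)=0$. If $\rho(V,\alpha)<\rho_0$, then $\beta(V,\alpha)<1$. In particular, $$\alpha^*(V)\le\inf\{\alpha>0:\rho(V,\alpha)\le\rho_0\}.$$
   Context: $\rho(V,\alpha)=\sum_{x\in\mathbb{Z}^d\setminus\{\vec0\}}e^{-\alpha V(x)}$; $\rho_0\approx0.44504$ is the unique solution $r\in[0,1]$ of $\frac{r}{(1-r)^2}-r=1$. $\Gamma$ is the set of finite cycles of $\mathbb{Z}^d$ (a cycle of length $|\gamma|=n\ge2$ on distinct sites $x_1,\dots,x_n$ maps $x_i\mapsto x_{i+1}$ mod $n$ and fixes other sites; support $\{\gamma\}$); $w(\gamma)=\exp\{-\alpha\sum_{x\in\{\gamma\}}V(\gamma(x)-x)\}$; $\beta(V,\alpha)=\sum_{\gamma\in\Gamma,\vec0\in\{\gamma\}}|\gamma|w(\gamma)$; $\alpha^*(V)=\inf\{\alpha:\beta(V,\alpha)<1\}$ (and $\alpha^*=\infty$ if $\beta(V,\alpha)=\infty$ for all $\alpha$). *)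

(* Defs.v *)
From HB Require Import structures.
From mathcomp Require Import all_boot all_order all_algebra.
From mathcomp Require Import all_classical all_reals all_analysis.
From mathcomp Require Import finmap.
Set Implicit Arguments. Unset Strict Implicit. Unset Printing Implicit Defensive.
Import Order.TTheory GRing.Theory Num.Theory.
Local Open Scope classical_set_scope.
Local Open Scope ring_scope.

Definition Zd (d : nat) := 'rV[int]_d.

Definition embed (R : realType) (d : nat) (x : Zd d) : 'rV[R]_d :=
  map_mx (fun z : int => z%:~R) x.

(** Strict convexity of an extended-valued function f : R^d -> R ∪ {+oo}
    (convexity of the epigraph, strict on the effective domain). *)
Definition strictly_convex_fun (R : realType) (d : nat) (f : 'rV[R]_d -> \bar R) :=
  forall (x y : 'rV[R]_d) (t : R), x != y -> 0 < t -> t < 1 ->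
    (f x < +oo)%E -> (f y < +oo)%E ->
    (f (t *: x + (1 - t) *: y)%R < t%:E * f x + (1 - t)%:E * f y)%E.

Definition strictly_convex_pot (R : realType) (d : nat) (V : Zd d -> \bar R) :=
  exists f : 'rV[R]_d -> \bar R,
    strictly_convex_fun f /\ forall x : Zd d, V x = f (embed R x).

Definition rho (R : realType) (d : nat) (V : Zd d -> \bar R) (alpha : R) : \bar R :=
  (\esum_(x in [set x : Zd d | x != 0%R]) expeR (- (alpha%:E * V x)))%E.

Definition rho0 (R : realType) : R :=
  xget 0 [set r : R | 0 <= r <= 1 /\ r / (1 - r) ^+ 2 - r = 1].

(** The cyclic permutation x_1 -> x_2 -> ... -> x_n -> x_1 given by a
    sequence s = [:: x_1; ...; x_n], fixing all other sites. *)
Definition cyc_of (d : nat) (s : seq (Zd d)) (x : Zd d) : Zd d :=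
  if x \in s then nth x s ((index x s).+1 %% size s) else x.

Definition Gamma (d : nat) : set (Zd d -> Zd d) :=
  [set g | exists s : seq (Zd d), [/\ uniq s, (2 <= size s)%N & g = cyc_of s]].

Definition supp (d : nat) (g : Zd d -> Zd d) : set (Zd d) := [set x | g x != x].

Definition cyc_len (d : nat) (g : Zd d -> Zd d) : nat := #|` fset_set (supp g)|%fset.

Definition cyc_weight (R : realType) (d : nat) (V : Zd d -> \bar R) (alpha : R)
    (g : Zd d -> Zd d) : \bar R :=
  expeR (- (alpha%:E * \sum_(x <- fset_set (supp g)) V (g x - x)%R))%E.

Definition beta (R : realType) (d : nat) (V : Zd d -> \bar R) (alpha : R) : \bar R :=
  (\esum_(g in [set g | Gamma g /\ supp g 0%R]) (cyc_len g)%:R%:E * cyc_weight V alpha g)%E.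

(** alpha^*(V) = inf {alpha : beta(V, alpha) < 1}  (= +oo if the set is empty). *)
Definition alpha_star (R : realType) (d : nat) (V : Zd d -> \bar R) : \bar R :=
  ereal_inf [set a%:E | a in [set a : R | (beta V a < 1)%E]].

(* Main.v *)
Require Import Defs.
From HB Require Import structures.
From mathcomp Require Import all_boot all_order all_algebra.
From mathcomp Require Import all_classical all_reals all_analysis.
From mathcomp Require Import finmap.
From mathcomp Require Import ring lra.
Set Implicit Arguments. Unset Strict Implicit. Unset Printing Implicit Defensive.
Import Order.TTheory GRing.Theory Num.Theory.
Local Open Scope classical_set_scope.
Local Open Scope ring_scope.

Section Cyc.
Variable d : nat.
Implicit Types (s : seq (Zd d)) (x : Zd d).

Lemma cyc_nth s i : uniq s -> (i < size s)%N ->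
  cyc_of s (nth 0 s i) = nth 0 s (i.+1 %% size s).
Proof.
move=> us lti; rewrite /cyc_of mem_nth // index_uniq //.
by apply: set_nth_default; rewrite ltn_pmod // (leq_ltn_trans _ lti).
Qed.

Lemma cyc_out s x : x \notin s -> cyc_of s x = x.
Proof. by rewrite /cyc_of => /negbTE ->. Qed.

Lemma cyc_of_next s : cyc_of s =1 next s.
Proof.
move=> x; rewrite next_nth /cyc_of; case: ifP => // xs.
case: s xs => [//|y s'] xs.
have hlt : (index x (y :: s') <= size s')%N by rewrite -ltnS index_mem.
rewrite [size _]/=.
case: (ltnP (index x (y :: s')) (size s')) => h.
  by rewrite modn_small ?ltnS // /= (set_nth_default y).
have -> : index x (y :: s') = size s' by apply/eqP; rewrite eqn_leq h hlt.
by rewrite modnn /= nth_default.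
Qed.

Lemma cyc_moved s x : uniq s -> (1 < size s)%N -> x \in s -> cyc_of s x != x.
Proof.
move=> us s2 xs; rewrite -{1 2}(nth_index 0 xs).
have hi : (index x s < size s)%N by rewrite index_mem.
rewrite cyc_nth // nth_uniq //; last by rewrite ltn_pmod // ltnW.
case: (ltnP (index x s).+1 (size s)) => h.
  by rewrite modn_small // (gtn_eqF (ltnSn _)).
have -> : (index x s).+1 = size s by apply/eqP; rewrite eqn_leq h hi.
rewrite modnn eq_sym; apply/eqP => h0.
by move: h; rewrite h0; case: (size s) s2 => [|[|]].
Qed.

Lemma supp_cyc s : uniq s -> (1 < size s)%N -> supp (cyc_of s) = [set x | x \in s].
Proof.
move=> us s2; apply/seteqP; split => x /=.
  by apply: contraNT => xs; rewrite cyc_out // eqxx.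
exact: cyc_moved.
Qed.

Definition jmp s i := nth 0 s (i.+1 %% size s) - nth 0 s i.

Lemma jmp_neq0 s i : uniq s -> (1 < size s)%N -> (i < size s)%N -> jmp s i != 0.
Proof.
move=> us s2 lti; rewrite /jmp subr_eq0 -cyc_nth //.
by apply: cyc_moved => //; rewrite mem_nth.
Qed.

End Cyc.
Section Cyc2.
Variable d : nat.
Implicit Types (s : seq (Zd d)) (x : Zd d).

Lemma fsupp_perm s : uniq s -> (1 < size s)%N ->
  perm_eq (fset_set (supp (cyc_of s))) s.
Proof.
move=> us s2; rewrite supp_cyc //.
apply: uniq_perm (fset_uniq _) us _ => x.
rewrite in_fset_set; last exact: finite_seq.
by rewrite mem_setE.
Qed.

Lemma cyc_len_cyc s : uniq s -> (1 < size s)%N -> cyc_len (cyc_of s) = size s.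
Proof. by move=> us s2; rewrite /cyc_len (perm_size (fsupp_perm us s2)). Qed.

Lemma cyc_sum_cyc (R : realType) (V : Zd d -> \bar R) s : uniq s -> (1 < size s)%N ->
  (\sum_(x <- fset_set (supp (cyc_of s))) V (cyc_of s x - x)%R)%E =
  (\sum_(0 <= i < size s) V (jmp s i))%E.
Proof.
move=> us s2; rewrite (perm_big _ (fsupp_perm us s2)) (big_nth 0).
by apply: eq_big_nat => i /andP[_ lti]; rewrite cyc_nth.
Qed.

End Cyc2.

Section Expo.
Variables (R : realType) (alpha : R).
Hypothesis alpha_gt0 : 0 < alpha.
Local Open Scope ereal_scope.

Let hy : alpha%:E * +oo = +oo.
Proof. by rewrite mulry gtr0_sg // mul1e. Qed.

Lemma expeR_D2 (a b : \bar R) : 0 <= a -> 0 <= b ->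
  expeR (- (alpha%:E * (a + b))) = expeR (- (alpha%:E * a)) * expeR (- (alpha%:E * b)).
Proof.
case: a => [ra| |] //; case: b => [rb| |] //= _ _.
- by rewrite -EFinM /= -expRD mulrDr opprD.
- by rewrite ?hy /= ?mule0.
- by rewrite ?hy /= ?mul0e.
- by rewrite ?hy /= ?mul0e.
Qed.

Lemma expeR_sum (I : Type) (l : seq I) (F : I -> \bar R) :
  (forall i, 0 <= F i) ->
  expeR (- (alpha%:E * \sum_(i <- l) F i)) = \prod_(i <- l) expeR (- (alpha%:E * F i)).
Proof.
move=> F0; elim: l => [|a l IH]; first by rewrite !big_nil mule0 oppe0 expeR0.
rewrite !big_cons expeR_D2 ?IH //; exact: sume_ge0.
Qed.

End Expo.
Lemma esum_ub (R : realType) (T : choiceType) (A : set T) (f : T -> \bar R) (M : \bar R) :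
  (forall l : seq T, uniq l -> (forall x, x \in l -> A x) -> (\sum_(x <- l) f x <= M)%E) ->
  (esum A f <= M)%E.
Proof.
move=> H; apply: ge_ereal_sup => _ [X [finX XA] <-].
rewrite fsbig_finite //; apply: H; first exact: fset_uniq.
by move=> x; rewrite in_fset_set // => /set_mem /XA.
Qed.

Lemma esum_lb (R : realType) (T : choiceType) (A : set T) (f : T -> \bar R) (l : seq T) :
  uniq l -> (forall x, x \in l -> A x) -> (\sum_(x <- l) f x <= esum A f)%E.
Proof.
move=> ul lA; apply: esum_ge; exists [set` l].
  by split; [exact: finite_seq| move=> x /= /lA].
by rewrite fsbig_seq.
Qed.

Lemma sum_le_all (R : realDomainType) (I : finType) (u : seq I) (H : I -> R) :
  uniq u -> (forall f, 0 <= H f) -> \sum_(f <- u) H f <= \sum_f H f.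
Proof.
move=> uu H0; rewrite big_uniq // [X in _ <= X](bigID (mem u) predT) /=.
by rewrite lerDl sumr_ge0.
Qed.

Lemma sum_pick (R : realDomainType) (N k : nat) (x : R) : (k < N)%N ->
  \sum_(n < N) (if k == n then x else 0) = x.
Proof.
move=> hk; rewrite (bigD1 (Ordinal hk)) //= eqxx big1 ?addr0 // => j hj.
rewrite ifN //; apply: contra hj => /eqP e; apply/eqP/val_inj; by rewrite /= e.
Qed.

Lemma seq_from_jmp d (s1 s2 : seq (Zd d)) n : size s1 = n -> size s2 = n ->
  nth 0 s1 0 = 0 -> nth 0 s2 0 = 0 ->
  (forall i, (i < n)%N -> jmp s1 i = jmp s2 i) -> s1 = s2.
Proof.
move=> h1 h2 z1 z2 hj; apply: (eq_from_nth (x0:=0)); first by rewrite h1 h2.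
rewrite h1; elim=> [|i IH] hi; first by rewrite z1 z2.
have e1 : nth 0 s1 i.+1 = jmp s1 i + nth 0 s1 i by rewrite /jmp modn_small ?h1 // subrK.
have e2 : nth 0 s2 i.+1 = jmp s2 i + nth 0 s2 i by rewrite /jmp modn_small ?h2 // subrK.
by rewrite e1 e2 hj ?IH // ltnW.
Qed.

Lemma series_bound (R : realFieldType) (r : R) (N : nat) : 0 <= r -> r < 1 ->
  (1 - r) ^+ 2 * \sum_(0 <= n < N) n%:R * r ^+ n = r - N%:R * r ^+ N + (N%:R - 1) * r ^+ N.+1.
Proof.
move=> r0 r1; elim: N => [|N IH]; first by rewrite big_geq // mulr0 !mul0r subr0 sub0r expr1 mulN1r subrr.
rewrite big_nat_recr //= mulrDr IH !exprS -natr1.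
ring.
Qed.
Lemma sumT (R : realFieldType) (M : nat) (r : R) : 0 <= r -> r < 1 ->
  \sum_(n < M.+2) (if (1 < n)%N then n%:R * r ^+ n else 0) <= r / (1 - r) ^+ 2 - r.
Proof.
move=> r0 r1.
have S : \sum_(0 <= n < M.+2) n%:R * r ^+ n <= r / (1 - r) ^+ 2.
  rewrite ler_pdivlMr ?exprn_gt0 ?subr_gt0 // mulrC series_bound //.
  have h1 : (M.+2%:R - 1) * r ^+ M.+3 <= M.+2%:R * r ^+ M.+2.
    rewrite exprS mulrA; apply: ler_wpM2r; first exact: exprn_ge0.
    have : (1 : R) <= M.+2%:R by rewrite ler1n.
    nra.
  lra.
have E : \sum_(n < M.+2) (if (1 < n)%N then n%:R * r ^+ n else 0) + r =
         \sum_(0 <= n < M.+2) n%:R * r ^+ n.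
  rewrite -(big_mkord xpredT (fun n => if (1 < n)%N then n%:R * r ^+ n else 0)).
  rewrite !big_nat_recl //= mul0r expr1 mul1r.
  rewrite (eq_bigr (fun i => i.+2%:R * r ^+ i.+2)) //.
  lra.
lra.
Qed.
Section Main.
Variables (R : realType) (d : nat) (V : Zd d -> \bar R) (alpha : R).
Hypotheses (alpha_gt0 : 0 < alpha) (V0 : forall x, (0 <= V x)%E).

Definition ew (y : Zd d) : \bar R := expeR (- (alpha%:E * V y))%E.
Definition erw y : R := fine (ew y).

Lemma ewE y : ew y = (erw y)%:E.
Proof.
rewrite /erw /ew; have := V0 y; case: (V y) => [v||] //= _.
by rewrite mulry gtr0_sg // mul1e.
Qed.

Lemma erw_ge0 y : 0 <= erw y.
Proof. by have := expeR_ge0 (- (alpha%:E * V y))%E; rewrite -/(ew y) ewE lee_fin. Qed.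

Lemma erw_le1 y : erw y <= 1.
Proof.
rewrite /erw /ew; have := V0 y; case: (V y) => [v||] //= v0.
  by rewrite expR_le1 oppr_le0 mulr_ge0 // ltW.
by rewrite mulry gtr0_sg // mul1e.
Qed.

Lemma weightE s : uniq s -> (1 < size s)%N ->
  cyc_weight V alpha (cyc_of s) = (\prod_(0 <= i < size s) erw (jmp s i))%:E.
Proof.
move=> us s2; rewrite /cyc_weight cyc_sum_cyc // expeR_sum // -prodEFin.
by apply: eq_bigr => i _; rewrite -ewE.
Qed.

Definition G0 := [set g : Zd d -> Zd d | Gamma g /\ supp g 0].
Definition Pseq (g : Zd d -> Zd d) := [set s : seq (Zd d) |
  [/\ uniq s, (1 < size s)%N, nth 0 s 0 = 0 & g = cyc_of s]].

Lemma Pseq_ex g : G0 g -> exists s, Pseq g s.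
Proof.
case=> [[s0 [u0 sz0 ->]] h0].
have z0 : (0 : Zd d) \in s0.
  by apply: contraT => /cyc_out e; move: h0; rewrite /supp /= e eqxx.
exists (rot (index 0 s0) s0); split.
- by rewrite rot_uniq.
- by rewrite size_rot.
- by rewrite rot_index.
- by apply: funext => x; rewrite !cyc_of_next next_rot.
Qed.

Definition sq g := xget [::] (Pseq g).
Lemma sqP g : G0 g -> Pseq g (sq g).
Proof. by move=> /Pseq_ex; apply: xgetPex. Qed.

Lemma h_ge0 (tl : seq (Zd d)) k : 0 <= nth 0 (map erw tl) k.
Proof.
case: (ltnP k (size tl)) => hk; first by rewrite (nth_map 0) // erw_ge0.
by rewrite nth_default ?size_map.
Qed.

Lemma per_n (L : seq (Zd d -> Zd d)) (tl : seq (Zd d)) n :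
  uniq L -> (forall g, g \in L -> G0 g) -> uniq tl ->
  (forall g i, g \in L -> (i < size (sq g))%N -> jmp (sq g) i \in tl) ->
  \sum_(g <- L | size (sq g) == n) \prod_(0 <= i < n) erw (jmp (sq g) i)
    <= (\sum_(y <- tl) erw y) ^+ n.
Proof.
move=> uL LG utl jtl.
set m := size tl.
pose h (k : 'I_m.+1) := nth 0 (map erw tl) k.
pose phi g : {ffun 'I_n -> 'I_m.+1} := [ffun i : 'I_n => inord (index (jmp (sq g) i) tl)].
have idx g (i : 'I_n) : g \in L -> size (sq g) = n -> (index (jmp (sq g) i) tl < m)%N.
  by move=> gL sz; rewrite index_mem jtl // sz.
have E1 g : g \in [seq g <- L | size (sq g) == n] ->
    \prod_(0 <= i < n) erw (jmp (sq g) i) = \prod_(i : 'I_n) h (phi g i).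
  rewrite mem_filter => /andP[/eqP sz gL].
  rewrite big_mkord; apply: eq_bigr => i _; rewrite ffunE /h inordK; last first.
    by apply: (leq_trans (idx g i gL sz)).
  by rewrite (nth_map 0) ?idx // nth_index // jtl // sz.
rewrite -big_filter (eq_big_seq _ E1) -(big_map phi xpredT (fun f => \prod_i h (f i))).
apply: (le_trans (sum_le_all _ _)).
- rewrite map_inj_in_uniq ?filter_uniq //.
  move=> g1 g2; rewrite !mem_filter => /andP[/eqP sz1 g1L] /andP[/eqP sz2 g2L] e.
  have [u1 s21 z1 eg1] := sqP (LG _ g1L).
  have [u2 s22 z2 eg2] := sqP (LG _ g2L).
  rewrite [LHS]eg1 [RHS]eg2; congr cyc_of; apply: (seq_from_jmp sz1 sz2 z1 z2) => i hi.
  have := congr1 (fun f : {ffun 'I_n -> 'I_m.+1} => nat_of_ord (f (Ordinal hi))) e; rewrite /phi !ffunE /=.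
  rewrite !inordK.
all: try (apply: (leq_trans (idx _ (Ordinal hi) _ _)); by [|rewrite ?sz1 ?sz2]).
  move/(congr1 (nth 0 tl)); rewrite !nth_index // jtl //.
    by rewrite sz2.
  by rewrite sz1.
- by move=> f; apply: prodr_ge0 => i _; apply: h_ge0.
rewrite -(bigA_distr_bigA (fun (_ : 'I_n) (j : 'I_m.+1) => h j)) /= prodr_const card_ord.
suff -> : \sum_(k < m.+1) h k = \sum_(y <- tl) erw y by [].
rewrite big_ord_recr /= /h nth_default ?size_map // addr0.
rewrite [RHS](big_nth 0) big_mkord; apply: eq_bigr => k _.
by rewrite (nth_map 0) //= ltn_ord.
Qed.

Variable r : R.
Hypotheses (hr0 : 0 <= r) (hr1 : r < 1) (hrho : rho V alpha = r%:E).

Lemma hrho_fin (l : seq (Zd d)) : uniq l -> (forall y, y \in l -> y != 0) ->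
  \sum_(y <- l) erw y <= r.
Proof.
move=> ul l0; rewrite -lee_fin -hrho -sumEFin.
rewrite (eq_bigr (fun y => ew y)); last by move=> y _; rewrite ewE.
exact: esum_lb.
Qed.

Lemma fin_bound (L : seq (Zd d -> Zd d)) : uniq L -> (forall g, g \in L -> G0 g) ->
  (\sum_(g <- L) ((cyc_len g)%:R%:E * cyc_weight V alpha g) <= (r / (1 - r) ^+ 2 - r)%:E)%E.
Proof.
move=> uL LG.
pose Fr g := (size (sq g))%:R * \prod_(0 <= i < size (sq g)) erw (jmp (sq g) i).
have Fg : {in L, (fun g => ((cyc_len g)%:R%:E * cyc_weight V alpha g)%E) =1 (fun g => (Fr g)%:E)}.
  move=> g gL; have [us s2 _ eg] := sqP (LG _ gL).
  by rewrite /= [in LHS]eg cyc_len_cyc // weightE // -EFinM.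
rewrite (eq_big_seq _ Fg) sumEFin lee_fin.
set N := \max_(g <- L) size (sq g).
set tl := undup (flatten [seq [seq jmp (sq g) i | i <- iota 0 (size (sq g))] | g <- L]).
have jtl g i : g \in L -> (i < size (sq g))%N -> jmp (sq g) i \in tl.
  move=> gL hi; rewrite mem_undup; apply/flatten_mapP; exists g => //.
  by apply: map_f; rewrite mem_iota.
have tlr : \sum_(y <- tl) erw y <= r.
  apply: hrho_fin; first exact: undup_uniq.
  move=> y; rewrite mem_undup => /flatten_mapP[g gL /mapP[i]].
  rewrite mem_iota => /andP[_ hi] ->.
  have [us s2 _ _] := sqP (LG _ gL); exact: jmp_neq0.
have tl0 : 0 <= \sum_(y <- tl) erw y by apply: sumr_ge0 => y _; apply: erw_ge0.
have szN g : g \in L -> (size (sq g) < N.+2)%N.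
  by move=> gL; rewrite ltnS; apply: leqW; exact: leq_bigmax_seq.
have -> : \sum_(g <- L) Fr g =
    \sum_(g <- L) \sum_(n < N.+2) (if size (sq g) == n then Fr g else 0).
  by apply: eq_big_seq => g gL; rewrite sum_pick // szN.
rewrite exchange_big /=.
apply: le_trans (sumT N hr0 hr1); apply: ler_sum => n _.
rewrite -big_mkcond /=.
case: ifP => hn.
  rewrite (eq_bigr (fun g => n%:R * \prod_(0 <= i < n) erw (jmp (sq g) i))); last first.
    by move=> g /eqP <-.
  rewrite -mulr_sumr; apply: ler_wpM2l => //.
  apply: le_trans (per_n n uL LG (undup_uniq _) jtl) _.
  by apply: lerXn2r => //; rewrite inE.
rewrite big1_seq // => g /andP[/eqP e gL]; have [_ s2 _ _] := sqP (LG _ gL).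
by move: hn; rewrite -e s2.
Qed.

Lemma beta_bound : (beta V alpha <= (r / (1 - r) ^+ 2 - r)%:E)%E.
Proof. by apply: esum_ub => l ul lG; apply: fin_bound => // g /lG. Qed.

End Main.
Lemma f_mono (R : realFieldType) (a b : R) : 0 <= a -> a < b -> b < 1 ->
  a / (1 - a) ^+ 2 - a < b / (1 - b) ^+ 2 - b.
Proof.
move=> a0 ab b1.
have pa : 0 < (1 - a) ^+ 2 by rewrite exprn_gt0 // subr_gt0 (lt_trans ab).
have pb : 0 < (1 - b) ^+ 2 by rewrite exprn_gt0 // subr_gt0.
have h1 : a / (1 - a) ^+ 2 <= a / (1 - b) ^+ 2.
  apply: ler_wpM2l => //; rewrite lef_pV2 ?posrE //.
  rewrite lerXn2r ?nnegrE ?subr_ge0 ?lerD2l ?lerN2 ?(ltW ab) //.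
    by rewrite ltW.
  by rewrite ltW // (lt_trans ab).
have h2 : b - a < (b - a) / (1 - b) ^+ 2.
  rewrite ltr_pdivlMr //.
  have : (1 - b) ^+ 2 < 1.
    rewrite expr2; have : 0 < 1 - b by rewrite subr_gt0.
    have : 0 < b by apply: le_lt_trans ab.
    nra.
  have : 0 < b - a by rewrite subr_gt0.
  nra.
have e : (b - a) / (1 - b) ^+ 2 = b / (1 - b) ^+ 2 - a / (1 - b) ^+ 2 by rewrite mulrBl.
lra.
Qed.

Definition Proot (R : realType) := [set r : R | 0 <= r <= 1 /\ r / (1 - r) ^+ 2 - r = 1].
Arguments Proot : clear implicits.

Lemma rho0_root (R : realType) : (exists p, Proot R p) ->
  [/\ 0 < rho0 R, rho0 R < 1 & rho0 R / (1 - rho0 R) ^+ 2 - rho0 R = 1].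
Proof.
move=> ex; have [/andP[p0 p1] pe] : Proot R (rho0 R) by apply: (xgetPex 0 ex).
split => //.
- rewrite lt_neqAle p0 andbT; apply/eqP => e; move: pe; rewrite -e.
  by rewrite mul0r subr0 => /eqP; rewrite eq_sym oner_eq0.
- rewrite lt_neqAle p1 andbT; apply/eqP => e; move: pe; rewrite e subrr.
  rewrite expr0n /= invr0 mulr0 sub0r => /eqP.
  by rewrite -subr_eq0 -opprD oppr_eq0 -(natrD R 1 1) pnatr_eq0.
Qed.

Lemma rho0_noroot (R : realType) : ~ (exists p, Proot R p) -> rho0 R = 0.
Proof. by move=> nex; apply: xgetPN => x hx; apply: nex; exists x. Qed.

Section Mono.
Variables (R : realType) (d : nat) (V : Zd d -> \bar R).
Hypothesis V0 : forall x, (0 <= V x)%E.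

Lemma erw_mono (a b : R) y : 0 < a -> a <= b -> erw V b y <= erw V a y.
Proof.
move=> a0 ab; rewrite /erw /ew; have := V0 y; case: (V y) => [v||] //= v0.
  rewrite ler_expR lerN2; apply: ler_wpM2r => //.
have b0 : 0 < b by apply: lt_le_trans ab.
by rewrite (mulry b) (mulry a) !gtr0_sg // !mul1e.
Qed.

Lemma rho_ge0 a : (0 <= rho V a)%E.
Proof. by apply: esum_ge0 => x _; apply: expeR_ge0. Qed.
End Mono.

Theorem corollary5p2 (R : realType) (d : nat) (V : Zd d -> \bar R) :
  strictly_convex_pot V ->
  V 0 = 0%E ->
  (forall x, (0 <= V x)%E) ->
  (forall alpha : R, 0 < alpha -> (rho V alpha < (rho0 R)%:E)%E ->
     (beta V alpha < 1)%E) /\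
  (alpha_star V <=
     ereal_inf [set a%:E | a in [set a : R | (0 < a)%R /\ (rho V a <= (rho0 R)%:E)%E]])%E.
Proof.
move=> _ _ V0.
have part1 : forall alpha : R, 0 < alpha -> (rho V alpha < (rho0 R)%:E)%E ->
    (beta V alpha < 1)%E.
  move=> a a0 hlt; have rge0 := rho_ge0 V a.
  case: (pselect (exists p, Proot R p)) => [ex|nex].
    have [p0 p1 pe] := rho0_root ex.
    move: hlt rge0; case E: (rho V a) => [r||] //; rewrite lte_fin lee_fin => hlt rge0.
    apply: le_lt_trans (beta_bound a0 V0 rge0 (lt_trans hlt p1) E) _.
    by rewrite lte_fin -[X in _ < X]pe f_mono.
  by move: hlt; rewrite rho0_noroot // => hlt; move: (lt_le_trans hlt rge0); rewrite ltxx.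
split => //.
have key : forall a : R, (beta V a < 1)%E -> (alpha_star V <= a%:E)%E.
  by move=> a ha; apply: ereal_inf_lbound; exists a.
apply/ereal_infP => _ [c [c0 hc] <-].
rewrite le_eqVlt in hc; case/orP: hc => [/eqP hc|hc]; last exact/key/part1.
case: (pselect (exists p, Proot R p)) => [ex|nex]; last first.
  apply: key; move: hc; rewrite rho0_noroot // => hc.
  apply: le_lt_trans (beta_bound c0 V0 (lexx 0) ltr01 hc) _.
  by rewrite lte_fin mul0r subr0.
have [p0 p1 pe] := rho0_root ex.
set p := rho0 R in p0 p1 pe hc.
have [y0 [y00 Vy0]] : exists y0 : Zd d, y0 != 0 /\ V y0 != +oo%E.
  apply: contrapT => hn.
  have hz : rho V c = 0%E.
    apply: esum1 => y /= yn0.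
    have -> : V y = +oo%E by apply: contrapT => hv; apply: hn; exists y; split => //; apply/eqP.
    by rewrite mulry gtr0_sg // mul1e.
  by move: hc; rewrite hz => /eqP; rewrite eqe eq_sym gt_eqF.
have [v Ev] : exists v, V y0 = v%:E.
  by move: (V0 y0) Vy0; case: (V y0) => [v||] // _ _; exists v.
have v0 : 0 < v.
  have := V0 y0; rewrite Ev lee_fin le_eqVlt => /orP[/eqP v0|//].
  have : (\sum_(y <- [:: y0]) expeR (- (c%:E * V y)) <= rho V c)%E.
    by apply: esum_lb => // y; rewrite inE => /eqP ->.
  rewrite big_seq1 Ev -v0 mule0 oppe0 expeR0 hc lee_fin => h1.
  by move: p1; rewrite ltNge h1.
apply/lee_addgt0Pr => e e0; rewrite -EFinD; apply: key; apply: part1.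
  by rewrite addr_gt0.
set b := c + e.
have b0 : 0 < b by rewrite addr_gt0.
set delta := erw V c y0 - erw V b y0.
have dpos : 0 < delta.
  rewrite /delta /erw /ew Ev /= subr_gt0 ltr_expR ltrN2 ltr_pM2r //.
  by rewrite /b ltrDl.
have hb : (rho V b <= (p - delta)%:E)%E.
  apply: esum_ub => l ul lA.
  rewrite (eq_bigr (fun y => (erw V b y)%:E)); last by move=> y _; exact: (ewE b0 V0).
  rewrite sumEFin lee_fin.
  pose l' := if y0 \in l then l else y0 :: l.
  have ul' : uniq l' by rewrite /l'; case: ifP => //= ->.
  have yl' : y0 \in l' by rewrite /l'; case: ifP => // _; rewrite inE eqxx.
  have l'0 : forall y, y \in l' -> y != 0.
    move=> y; rewrite /l'; case: ifP => _; first by move/lA.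
    by rewrite inE => /orP[/eqP ->//|/lA].
  have s1 : \sum_(y <- l) erw V b y <= \sum_(y <- l') erw V b y.
    rewrite /l'; case: ifP => // _; rewrite big_cons lerDr.
    exact: erw_ge0.
  have s2 : \sum_(y <- l') erw V c y <= p := hrho_fin c0 V0 hc ul' l'0.
  have s3 : delta <= \sum_(y <- l') (erw V c y - erw V b y).
    rewrite (bigD1_seq y0) //= lerDl; apply: sumr_ge0 => y _.
    by rewrite subr_ge0 erw_mono // /b lerDl ltW.
  have s4 : \sum_(y <- l') (erw V c y - erw V b y) =
      \sum_(y <- l') erw V c y - \sum_(y <- l') erw V b y by rewrite sumrB.
  lra.
apply: le_lt_trans hb _; rewrite lte_fin /p; lra.
Qed.
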